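(* Consider binary floating-point arithmetic with precision $p\ge 4$ and unit round-off $u=2^{-p}$, operations correctly rounded to nearest ($\mathrm{RN}$), barring overflow and underflow. For floating-point inputs $x,y$ consider the algorithm: if $|x|<|y|$ swap $x$ and $y$; $(s_x^h,s_x^\ell)\gets\mathrm{Fast2Mult}(x,x)$; $(s_y^h,s_y^\ell)\gets\mathrm{Fast2Mult}(y,y)$; $(\sigma_h,\sigma_\ell)\gets\mathrm{Fast2Sum}(s_x^h,s_y^h)$; $s\gets\mathrm{RN}(\sqrt{\sigma_h})$; $\delta_s\gets\mathrm{RN}(\sigma_h-s^2)$; $\tau_1\gets\mathrm{RN}(s_x^\ell+s_y^\ell)$; $\tau_2\gets\mathrm{RN}(\delta_s+\sigma_\ell)$; $\tau\gets\mathrm{RN}(\tau_1+\tau_2)$; $c\gets\mathrm{RN}(\tau/s)$; $\rho_4\gets\mathrm{RN}(c/2+s)$. Then the relative error $|\rho_4/\sqrt{x^2+y^2}-1|$ is bounded by $u+(7+\kappa)u^2$, where $\kappa\le 21.4$ if $u\le 2^{-4}$; $\kappa\le 6.1$ if $u\le 2^{-5}$; $\kappa\le 2.5$ if $u\le2^{-6}$; $\kappa\le 1.2$ if $u\le 2^{-7}$; $\kappa\le 0.6$ if $u\le 2^{-8}$; $\kappa\le 7\cdot10^{-2}$ if $u\le 2^{-11}$; $\kappa\le 8\cdot 10^{-6}$ if $u\le 2^{-24}$; $\kappa\le 2\cdot10^{-14}$ if $u\le 2^{-53}$; $\kappa\le 2\cdot 10^{-32}$ if $u\le 2^{-113}$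.
   Context: A radix-2 floating-point number of precision $p$ has the form $M\cdot 2^{e-p+1}$ with integers $|M|\le 2^p-1$ and $e_{\min}\le e\le e_{\max}$. $\mathrm{RN}$ is rounding to nearest (ties-to-even). $\mathrm{Fast2Mult}(a,b)$ returns the pair of floating-point numbers $(h,\ell)$ with $h=\mathrm{RN}(ab)$ and $\ell = ab-h$ exactly; $\mathrm{Fast2Sum}(a,b)$ returns $(h,\ell)$ with $h=\mathrm{RN}(a+b)$ and $\ell=(a+b)-h$ exactly. The computation $\delta_s = \mathrm{RN}(\sigma_h-s^2)$ is done with a single rounding (FMA). *)

(* Defs.v *)
(* binary floating-point arithmetic of precision p with an
   unbounded exponent range (no overflow, no underflow). *)
From Stdlib Require Import Reals Lra ZArith List.
Open Scope R_scope.

Definition is_fp (p : Z) (x : R) : Prop :=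
  exists M e : Z, x = IZR M * powerRZ 2 (e - p + 1) /\ (Z.abs M <= 2 ^ p - 1)%Z.

(* r has an even integral significand in its normalized representation
   (every nonzero float has a unique normalized one since there is no
   underflow). Zero counts as even. *)
Definition even_fp (p : Z) (r : R) : Prop :=
  r = 0 \/
  exists M e : Z, r = IZR M * powerRZ 2 (e - p + 1) /\
    (2 ^ (p - 1) <= Z.abs M <= 2 ^ p - 1)%Z /\ Z.even M = true.

Definition is_RN (p : Z) (x r : R) : Prop :=
  is_fp p r /\
  (forall f, is_fp p f -> Rabs (x - r) <= Rabs (x - f)) /\
  (forall f, is_fp p f -> f <> r -> Rabs (x - f) = Rabs (x - r) -> even_fp p r).

(* The table of (k, kappa_k): if u <= 2^-k then kappa <= kappa_k. *)
Definition kappa_table : list (Z * R) :=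
  (4%Z, 214 / 10) :: (5%Z, 61 / 10) :: (6%Z, 25 / 10) :: (7%Z, 12 / 10) ::
  (8%Z, 6 / 10) :: (11%Z, 7 / 100) :: (24%Z, 8 / 10 ^ 6) ::
  (53%Z, 2 / 10 ^ 14) :: (113%Z, 2 / 10 ^ 32) :: nil.

(* Main.v *)
Require Import Defs.
From Stdlib Require Import Reals ZArith List Lra Lia Psatz.
Open Scope R_scope.

Notation P2 := (powerRZ 2).

Lemma P2_pos z : 0 < P2 z.
Proof. apply powerRZ_lt; lra. Qed.

Lemma P2_add a b : P2 (a + b) = P2 a * P2 b.
Proof. apply powerRZ_add; lra. Qed.

Lemma IZR_pow2 k : (0 <= k)%Z -> IZR (2 ^ k) = P2 k.
Proof.
  intros Hk. destruct k as [|q|q].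
  - simpl. reflexivity.
  - rewrite <- Zpower_pos_powerRZ. reflexivity.
  - lia.
Qed.

Lemma fp_mk p m G : (Z.abs m <= 2 ^ p - 1)%Z -> is_fp p (IZR m * P2 G).
Proof.
  intros H. exists m, (G + p - 1)%Z. split; auto.
  f_equal. f_equal. ring.
Qed.

Lemma Rabs_le_both z B : Rabs z <= B -> - B <= z <= B.
Proof. unfold Rabs; destruct (Rcase_abs z); lra. Qed.

Lemma Rabs_le_intro z B : - B <= z <= B -> Rabs z <= B.
Proof. unfold Rabs; destruct (Rcase_abs z); lra. Qed.

Lemma norm_pos p r : (1 <= p)%Z -> is_fp p r -> 0 < r ->
  exists R F, r = IZR R * P2 F /\ (2 ^ (p - 1) <= R <= 2 ^ p - 1)%Z.
Proof.
  intros Hp [M [e [Hr HM]]] Hpos.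
  assert (HM0 : (0 < M)%Z).
  { destruct (Z_lt_le_dec 0 M) as [h|h]; auto.
    exfalso. apply IZR_le in h. pose proof (P2_pos (e - p + 1)). nra. }
  pose proof (Z.log2_spec M HM0) as [L1 L2].
  assert (Hl : (Z.log2 M <= p - 1)%Z).
  { assert (M < 2 ^ p)%Z by lia.
    apply Z.log2_lt_pow2 in H; lia. }
  set (k := (p - 1 - Z.log2 M)%Z).
  assert (Hk : (0 <= k)%Z) by (unfold k; lia).
  pose proof (Z.log2_nonneg M).
  exists (M * 2 ^ k)%Z, (e - p + 1 - k)%Z. split.
  - rewrite Hr, mult_IZR, IZR_pow2 by auto.
    rewrite Rmult_assoc, <- P2_add. f_equal. f_equal. ring.
  - split.
    + assert (E: (p - 1 = Z.log2 M + k)%Z) by (unfold k; ring).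
      rewrite E, Z.pow_add_r by lia. nia.
    + assert (M * 2 ^ k < 2 ^ p)%Z; [|lia].
      assert (E: (p = Z.succ (Z.log2 M) + k)%Z) by (unfold k; lia).
      rewrite E, Z.pow_add_r by lia. nia.
Qed.

Lemma neighbor_lo p x r f : is_RN p x r -> is_fp p f -> f < r -> x < r -> r - x <= (r - f) / 2.
Proof.
  intros [_ [Hopt _]] Hf Hfr Hxr. specialize (Hopt f Hf).
  unfold Rabs in Hopt; repeat destruct Rcase_abs in Hopt; lra.
Qed.

Lemma neighbor_hi p x r f : is_RN p x r -> is_fp p f -> r < f -> r < x -> x - r <= (f - r) / 2.
Proof.
  intros [_ [Hopt _]] Hf Hfr Hxr. specialize (Hopt f Hf).
  unfold Rabs in Hopt; repeat destruct Rcase_abs in Hopt; lra.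
Qed.

Lemma pow2_split p : (1 <= p)%Z -> IZR (2 ^ p) = 2 * IZR (2 ^ (p - 1)).
Proof.
  intros. replace p with (Z.succ (p - 1)) at 1 by lia.
  rewrite Z.pow_succ_r by lia. rewrite mult_IZR. reflexivity.
Qed.

Lemma RN_norm p x r R F : (1 <= p)%Z -> is_RN p x r -> r = IZR R * P2 F ->
  (2 ^ (p - 1) <= R <= 2 ^ p - 1)%Z ->
  Rabs (x - r) <= P2 F / 2 /\ ((R = 2 ^ (p - 1))%Z -> x < r -> r - x <= P2 F / 4).
Proof.
  intros Hp HRN Hr HR.
  pose proof (P2_pos F) as HU.
  assert (Hpp : (0 < 2 ^ (p - 1))%Z) by (apply Z.pow_pos_nonneg; lia).
  assert (Hup : is_fp p (IZR (R + 1) * P2 F)).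
  { destruct (Z.eq_dec (R + 1) (2 ^ p)) as [E|E].
    - rewrite E, pow2_split by lia.
      replace (2 * IZR (2 ^ (p - 1)) * P2 F) with (IZR (2 ^ (p - 1)) * P2 (F + 1)).
      + apply fp_mk. rewrite Z.abs_eq by lia.
        assert (2 ^ p = 2 * 2 ^ (p - 1))%Z.
        { replace p with (Z.succ (p - 1)) at 1 by lia. rewrite Z.pow_succ_r by lia. ring. }
        lia.
      + rewrite P2_add. simpl. ring.
    - apply fp_mk. rewrite Z.abs_eq by lia. lia. }
  assert (Hdn : is_fp p (IZR (R - 1) * P2 F)).
  { apply fp_mk. rewrite Z.abs_eq by lia. lia. }
  rewrite plus_IZR in Hup. rewrite minus_IZR in Hdn.
  split.
  - apply Rabs_le_intro.
    destruct (Rlt_le_dec r x) as [h|h].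
    + pose proof (neighbor_hi p x r _ HRN Hup) as H. rewrite Hr in *. 
      assert (IZR R * P2 F < (IZR R + 1) * P2 F) by nra. specialize (H H0 h). lra.
    + destruct (Rle_lt_dec r x) as [h'|h']. { lra. }
      pose proof (neighbor_lo p x r _ HRN Hdn) as H. rewrite Hr in *.
      assert ((IZR R - 1) * P2 F < IZR R * P2 F) by nra. specialize (H H0 h'). lra.
  - intros ER Hxr.
    assert (Hf : is_fp p (IZR (2 ^ p - 1) * P2 (F - 1))).
    { apply fp_mk. rewrite Z.abs_eq; [lia|].
      assert (0 < 2 ^ p)%Z by (apply Z.pow_pos_nonneg; lia). lia. }
    assert (EF : P2 F = 2 * P2 (F - 1)).
    { replace F with ((F - 1) + 1)%Z at 1 by ring. rewrite P2_add. simpl. ring. }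
    pose proof (P2_pos (F - 1)).
    rewrite minus_IZR, pow2_split in Hf by lia.
    rewrite ER in Hr.
    pose proof (neighbor_lo p x r _ HRN Hf) as Hn.
    assert (Hge : IZR (2 ^ (p - 1)) >= 1).
    { apply Rle_ge. apply IZR_le. lia. }
    rewrite Hr, EF in *. 
    assert (Hlt : (2 * IZR (2 ^ (p - 1)) - 1) * P2 (F - 1) < IZR (2 ^ (p - 1)) * (2 * P2 (F - 1))) by nra.
    specialize (Hn Hlt Hxr). nra.
Qed.

Lemma fp_opp p x : is_fp p x -> is_fp p (- x).
Proof.
  intros [M [e [H1 H2]]]. exists (- M)%Z, e. split.
  - rewrite H1, opp_IZR. ring.
  - rewrite Z.abs_opp. auto.
Qed.

Lemma even_opp p x : even_fp p x -> even_fp p (- x).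
Proof.
  intros [H|[M [e [H1 [H2 H3]]]]].
  - left. rewrite H. ring.
  - right. exists (- M)%Z, e. split; [rewrite H1, opp_IZR; ring|].
    rewrite Z.abs_opp, Z.even_opp. auto.
Qed.

Lemma RN_opp p x r : is_RN p x r -> is_RN p (- x) (- r).
Proof.
  intros [H1 [H2 H3]]. split; [apply fp_opp; auto|split].
  - intros f Hf. specialize (H2 (- f) (fp_opp _ _ Hf)).
    replace (- x - - r) with (- (x - r)) by ring.
    replace (- x - f) with (- (x - - f)) by ring.
    rewrite !Rabs_Ropp. auto.
  - intros f Hf Hne Heq. apply even_opp.
    apply (H3 (- f) (fp_opp _ _ Hf)).
    + intro E. apply Hne. rewrite <- E. ring.
    + replace (x - - f) with (- (- x - f)) by ring.
      replace (x - r) with (- (- x - - r)) by ring.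
      rewrite !Rabs_Ropp. auto.
Qed.

Lemma pow_gt_lin n : (0 < n)%Z -> (n < 2 ^ n)%Z.
Proof. intros. apply Z.pow_gt_lin_r; lia. Qed.

Lemma RN_zero p x : (1 <= p)%Z -> is_RN p x 0 -> x = 0.
Proof.
  intros Hp [_ [Hopt _]].
  destruct (Req_dec x 0) as [h|h]; auto. exfalso.
  assert (Ha : 0 < Rabs x) by (apply Rabs_pos_lt; auto).
  destruct (archimed (/ Rabs x)) as [A1 _].
  set (n := up (/ Rabs x)) in *.
  assert (Hn : (0 < n)%Z).
  { apply lt_IZR. pose proof (Rinv_0_lt_compat _ Ha). simpl. lra. }
  pose proof (pow_gt_lin n Hn) as Hg. apply IZR_lt in Hg.
  rewrite IZR_pow2 in Hg by lia.
  assert (Hsm : P2 (- n) < Rabs x).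
  { rewrite powerRZ_neg'. pose proof (P2_pos n).
    apply Rmult_lt_reg_l with (P2 n); auto.
    rewrite Rinv_r by lra.
    assert (/ Rabs x * Rabs x = 1) by (field; lra).
    nra. }
  pose proof (P2_pos (- n)) as Hpos.
  assert (H1 : is_fp p (IZR 1 * P2 (- n))).
  { apply fp_mk. assert (2 <= 2 ^ p)%Z.
    { replace 2%Z with (2 ^ 1)%Z at 1 by reflexivity. apply Z.pow_le_mono_r; lia. }
    simpl. lia. }
  assert (H2 : is_fp p (- (IZR 1 * P2 (- n)))) by (apply fp_opp; auto).
  simpl in H1, H2.
  destruct (Rle_lt_dec 0 x) as [hx|hx].
  - specialize (Hopt _ H1). rewrite Rabs_pos_eq in Hsm by lra.
    unfold Rabs in Hopt; repeat destruct Rcase_abs in Hopt; lra.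
  - specialize (Hopt _ H2). rewrite Rabs_left in Hsm by lra.
    unfold Rabs in Hopt; repeat destruct Rcase_abs in Hopt; lra.
Qed.

Lemma u_h p : (1 <= p)%Z -> P2 (- p) * (2 * IZR (2 ^ (p - 1))) = 1.
Proof.
  intros Hp. rewrite <- pow2_split by lia. rewrite IZR_pow2 by lia.
  rewrite <- P2_add. replace (- p + p)%Z with 0%Z by ring. reflexivity.
Qed.

Lemma RN_rel_pos p x r : (1 <= p)%Z -> is_RN p x r -> 0 < r ->
  (1 + P2 (- p)) * Rabs (x - r) <= P2 (- p) * Rabs x.
Proof.
  intros Hp HRN Hr.
  destruct (norm_pos p r Hp (proj1 HRN) Hr) as [R [F [ER HR]]].
  destruct (RN_norm p x r R F Hp HRN ER HR) as [H1 H2].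
  pose proof (u_h p Hp) as Hu.
  set (u := P2 (- p)) in *. set (h := IZR (2 ^ (p - 1))) in *.
  pose proof (P2_pos F) as HU. set (U := P2 F) in *.
  assert (Hh : 1 <= h) by (unfold h; apply IZR_le; assert (0 < 2 ^ (p - 1))%Z by (apply Z.pow_pos_nonneg; lia); lia).
  assert (HRh : h <= IZR R) by (unfold h; apply IZR_le; lia).
  assert (Hu0 : 0 < u) by (unfold u; apply P2_pos).
  apply Rabs_le_both in H1.
  destruct (Rle_lt_dec r x) as [hx|hx].
  - rewrite (Rabs_pos_eq (x - r)) by lra. rewrite (Rabs_pos_eq x) by lra.
    assert (U / 2 <= u * r) by (rewrite ER; nra). nra.
  - rewrite (Rabs_left (x - r)) by lra.
    destruct (Z.eq_dec R (2 ^ (p - 1))) as [E|E].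
    + specialize (H2 E hx).
      assert (IZR R = h) by (unfold h; rewrite E; auto).
      assert (0 < x) by (rewrite ER in *; nra).
      rewrite (Rabs_pos_eq x) by lra. rewrite ER in *. nra.
    + assert (HR1 : h + 1 <= IZR R) by (unfold h; rewrite <- plus_IZR; apply IZR_le; lia).
      assert (0 < x) by (rewrite ER in *; nra).
      rewrite (Rabs_pos_eq x) by lra. rewrite ER in *. nra.
Qed.

Lemma RN_rel p x r : (1 <= p)%Z -> is_RN p x r ->
  (1 + P2 (- p)) * Rabs (x - r) <= P2 (- p) * Rabs x.
Proof.
  intros Hp HRN.
  pose proof (P2_pos (- p)).
  destruct (Rtotal_order r 0) as [h|[h|h]].
  - pose proof (RN_rel_pos p (- x) (- r) Hp (RN_opp _ _ _ HRN)) as H'.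
    replace (- x - - r) with (- (x - r)) in H' by ring.
    rewrite !Rabs_Ropp in H'. apply H'. lra.
  - subst. rewrite (RN_zero p x Hp HRN). rewrite Rminus_0_r, Rabs_R0. lra.
  - apply RN_rel_pos; auto.
Qed.

Lemma RN_exact p x r : is_fp p x -> is_RN p x r -> r = x.
Proof.
  intros Hx [_ [Hopt _]]. specialize (Hopt x Hx).
  rewrite Rminus_diag, Rabs_R0 in Hopt.
  pose proof (Rabs_pos (x - r)).
  assert (Rabs (x - r) = 0) by lra.
  unfold Rabs in H0; destruct Rcase_abs in H0; lra.
Qed.

Lemma u_le p : (2 <= p)%Z -> P2 (- p) <= / 4.
Proof.
  intros Hp. rewrite powerRZ_neg'. rewrite <- IZR_pow2 by lia.
  apply Rinv_le_contravar; [lra|].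
  replace 4 with (IZR (2 ^ 2)) by (simpl; lra).
  apply IZR_le. apply Z.pow_le_mono_r; lia.
Qed.

Lemma sqrt_exact p g s : (2 <= p)%Z -> is_fp p g -> 0 < g -> is_RN p (sqrt g) s ->
  is_fp p (g - s * s).
Proof.
  intros Hp Hg Hg0 HRN.
  pose proof (RN_rel p _ _ ltac:(lia) HRN) as Hrel.
  pose proof (u_le p Hp) as Hu.
  pose proof (P2_pos (- p)) as Hu0.
  set (u := P2 (- p)) in *.
  set (x0 := sqrt g) in *.
  assert (Hx0 : 0 < x0) by (apply sqrt_lt_R0; auto).
  assert (Hxx : x0 * x0 = g) by (apply sqrt_sqrt; lra).
  rewrite (Rabs_pos_eq x0) in Hrel by lra.
  assert (Hd := Rabs_le_both (x0 - s) (u * x0 / (1 + u))).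
  assert (Hd' : Rabs (x0 - s) <= u * x0 / (1 + u)).
  { apply Rmult_le_reg_l with (1 + u); [lra|]. field_simplify; lra. }
  specialize (Hd Hd').
  assert (Hq : u * x0 / (1 + u) <= u * x0).
  { apply Rmult_le_reg_r with (1 + u); [lra|]. unfold Rdiv. rewrite Rmult_assoc, Rinv_l by lra. nra. }
  assert (Hs0 : 0 < s) by nra.
  assert (HX : g - s * s = (x0 - s) * (x0 + s)) by (rewrite <- Hxx; ring).
  destruct Hg as [M [e [Eg HM]]].
  set (E := (e - p + 1)%Z) in *.
  assert (HM0 : (0 < M)%Z).
  { destruct (Z_lt_le_dec 0 M) as [h|h]; auto.
    exfalso. apply IZR_le in h. pose proof (P2_pos E). nra. }
  destruct (norm_pos p s ltac:(lia) (proj1 HRN) Hs0) as [S [F [ES HS]]].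
  destruct (RN_norm p x0 s S F ltac:(lia) HRN ES HS) as [Hn _].
  pose proof (P2_pos F) as HU. pose proof (P2_pos E) as HE.
  destruct (Z_le_gt_dec E (F + F)) as [c|c].
  - set (k := (F + F - E)%Z).
    assert (Ess : s * s = IZR (S * S * 2 ^ k) * P2 E).
    { rewrite ES, !mult_IZR, IZR_pow2 by (unfold k; lia).
      replace (IZR S * P2 F * (IZR S * P2 F)) with (IZR S * IZR S * (P2 F * P2 F)) by ring.
      rewrite <- P2_add. replace (F + F)%Z with (k + E)%Z by (unfold k; ring).
      rewrite P2_add. ring. }
    assert (EX : g - s * s = IZR (M - S * S * 2 ^ k) * P2 E).
    { rewrite Ess, Eg, minus_IZR. ring. }
    rewrite EX. apply fp_mk.
    assert (Hlt : Rabs (g - s * s) < g).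
    { rewrite HX, Rabs_mult. rewrite (Rabs_pos_eq (x0 + s)) by lra.
      assert (Rabs (x0 - s) <= u * x0) by lra.
      assert (x0 + s <= (2 + u) * x0) by lra.
      apply Rle_lt_trans with (u * x0 * ((2 + u) * x0)).
      - apply Rmult_le_compat; try lra. apply Rabs_pos.
      - rewrite <- Hxx. nra. }
    rewrite EX, Eg, Rabs_mult, (Rabs_pos_eq (P2 E)) in Hlt by lra.
    rewrite <- abs_IZR in Hlt.
    apply Rmult_lt_reg_r in Hlt; auto. apply lt_IZR in Hlt. lia.
  - set (k := (E - (F + F))%Z).
    assert (Eg' : g = IZR (M * 2 ^ k) * P2 (F + F)).
    { rewrite Eg, mult_IZR, IZR_pow2 by (unfold k; lia).
      rewrite Rmult_assoc, <- P2_add. f_equal. f_equal. unfold k, E; ring. }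
    assert (EX : g - s * s = IZR (M * 2 ^ k - S * S) * P2 (F + F)).
    { rewrite Eg' at 1. rewrite ES, minus_IZR, !mult_IZR, P2_add. ring. }
    rewrite EX. apply fp_mk.
    assert (Hle : Rabs (g - s * s) <= P2 F * P2 F * (IZR S + / 4)).
    { rewrite HX, Rabs_mult. rewrite (Rabs_pos_eq (x0 + s)) by lra.
      apply Rabs_le_both in Hn.
      assert (x0 + s <= 2 * s + P2 F / 2) by lra.
      apply Rle_trans with (P2 F / 2 * (2 * s + P2 F / 2)).
      - apply Rmult_le_compat; try lra. apply Rabs_pos. apply Rabs_le_intro; lra.
      - rewrite ES. nra. }
    rewrite EX, Rabs_mult, (Rabs_pos_eq (P2 (F + F))) in Hle by (apply Rlt_le, P2_pos).
    rewrite P2_add, <- abs_IZR in Hle.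
    assert (IZR (Z.abs (M * 2 ^ k - S * S)) <= IZR S + / 4).
    { apply Rmult_le_reg_r with (P2 F * P2 F); [nra|]. lra. }
    assert (IZR (Z.abs (M * 2 ^ k - S * S)) < IZR (S + 1)) by (rewrite plus_IZR; lra).
    apply lt_IZR in H0. lia.
Qed.

Lemma Rabs_le_both' z B : Rabs z <= B -> - B <= z <= B.
Proof. unfold Rabs; destruct (Rcase_abs z); lra. Qed.
Lemma Rabs_le_intro' z B : - B <= z <= B -> Rabs z <= B.
Proof. unfold Rabs; destruct (Rcase_abs z); lra. Qed.

Lemma poly_ineq u : 0 < u <= /16 ->
  (2*u+u^2)^2 + (1+u)*(u*(2+u)*(u + ((1+u)^4-(1+u)))) + u*((1+u)^4-1)
  <= 2*(1-u)^2*(8*u^2+55*u^3).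
Proof.
  intros H.
  assert (Hq : 0 < 44 - 239*u + 89*u^2 - 7*u^3 - u^4).
  { assert (u^2 <= u) by nra. assert (u^3 <= u^2) by nra. assert (u^4 <= u^3) by nra.
    assert (0 <= u^2) by nra. lra. }
  assert (Hu3 : 0 < u^3) by (apply pow_lt; lra).
  assert (E : 2*(1-u)^2*(8*u^2+55*u^3) - ((2*u+u^2)^2 + (1+u)*(u*(2+u)*(u + ((1+u)^4-(1+u)))) + u*((1+u)^4-1))
     = u^3 * (44 - 239*u + 89*u^2 - 7*u^3 - u^4)) by ring.
  nra.
Qed.

Lemma core u sig r a2 b2 sxh syh sgh x0 s sgl sxl syl ds t1 t2 t c z :
  0 < u <= /16 -> 0 <= a2 -> 0 <= b2 -> sig = a2 + b2 -> 0 < sig -> 0 < r -> r * r = sig ->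
  Rabs (a2 - sxh) <= u * a2 -> sxl = a2 - sxh ->
  Rabs (b2 - syh) <= u * b2 -> syl = b2 - syh ->
  Rabs ((sxh + syh) - sgh) <= u * Rabs (sxh + syh) -> sgl = sxh + syh - sgh ->
  0 <= x0 -> x0 * x0 = sgh -> Rabs (x0 - s) <= u * x0 ->
  ds = sgh - s * s ->
  Rabs ((sxl + syl) - t1) <= u * Rabs (sxl + syl) ->
  Rabs ((ds + sgl) - t2) <= u * Rabs (ds + sgl) ->
  Rabs ((t1 + t2) - t) <= u * Rabs (t1 + t2) ->
  Rabs (t / s - c) <= u * Rabs (t / s) ->
  z = c / 2 + s ->
  0 < s /\ Rabs (z - r) <= (8*u^2+55*u^3) * r.
Proof.
  intros Hu Ha Hb Hsig Hsig0 Hr Hrr Ea Exl Eb Eyl Esg Egl Hx0 Hxx Es Eds E1 E2 E3 E4 Ez.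
  apply Rabs_le_both' in Ea. apply Rabs_le_both' in Eb.
  set (S1 := sxh + syh) in *.
  assert (HS1 : (1 - u) * sig <= S1 <= (1 + u) * sig) by (unfold S1; rewrite Hsig; nra).
  assert (HS10 : 0 < S1) by nra.
  rewrite (Rabs_pos_eq S1) in Esg by lra. apply Rabs_le_both' in Esg.
  assert (Hg : (1 - u) * S1 <= sgh <= (1 + u) * S1) by lra.
  assert (Hg0 : 0 < sgh) by nra.
  assert (Hx00 : 0 < x0).
  { destruct Hx0 as [h|h]; auto. subst x0. lra. }
  apply Rabs_le_both' in Es.
  assert (Hs0 : 0 < s) by nra.
  split; auto.
  assert (Hup : 0 <= 1 + u) by lra. assert (Hum : 0 <= 1 - u) by lra.
  assert (H1 : s * s <= (1 + u)^2 * sgh).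
  { rewrite <- Hxx. assert (s <= (1 + u) * x0) by lra. nra. }
  assert (H1' : (1 - u)^2 * sgh <= s * s).
  { rewrite <- Hxx. assert (0 <= (1 - u) * x0 <= s) by nra. nra. }
  assert (H2 : s * s <= (1 + u)^3 * S1).
  { apply Rle_trans with ((1+u)^2 * sgh); auto.
    replace ((1+u)^3 * S1) with ((1+u)^2 * ((1+u) * S1)) by ring.
    apply Rmult_le_compat_l; [nra|lra]. }
  assert (H2' : (1 - u)^3 * S1 <= s * s).
  { apply Rle_trans with ((1-u)^2 * sgh); auto.
    replace ((1-u)^3 * S1) with ((1-u)^2 * ((1-u) * S1)) by ring.
    apply Rmult_le_compat_l; [nra|lra]. }
  assert (H3 : s * s <= (1 + u)^4 * sig).
  { apply Rle_trans with ((1+u)^3 * S1); auto.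
    replace ((1+u)^4 * sig) with ((1+u)^3 * ((1+u) * sig)) by ring.
    apply Rmult_le_compat_l; [apply pow_le; lra|lra]. }
  assert (H3' : (1 - u)^4 * sig <= s * s).
  { apply Rle_trans with ((1-u)^3 * S1); auto.
    replace ((1-u)^4 * sig) with ((1-u)^3 * ((1-u) * sig)) by ring.
    apply Rmult_le_compat_l; [apply pow_le; lra|lra]. }
  assert (Hsr : (1 - u)^2 * r <= s <= (1 + u)^2 * r).
  { split.
    - destruct (Rle_lt_dec ((1 - u)^2 * r) s) as [h|h]; auto. exfalso.
      assert (0 <= (1-u)^2 * r) by (apply Rmult_le_pos; [apply pow_le|]; lra).
      assert (s * s < ((1-u)^2 * r) * ((1-u)^2 * r)) by nra.
      replace (((1-u)^2 * r) * ((1-u)^2 * r)) with ((1-u)^4 * (r * r)) in H0 by ring.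
      rewrite Hrr in H0. lra.
    - destruct (Rle_lt_dec s ((1 + u)^2 * r)) as [h|h]; auto. exfalso.
      assert (0 <= (1+u)^2 * r) by (apply Rmult_le_pos; [apply pow_le|]; lra).
      assert (((1+u)^2 * r) * ((1+u)^2 * r) < s * s) by nra.
      replace (((1+u)^2 * r) * ((1+u)^2 * r)) with ((1+u)^4 * (r * r)) in H0 by ring.
      rewrite Hrr in H0. lra. }
  set (A0 := (1 + u)^4 - (1 + u)).
  set (T := (1 + u)^4 - 1).
  set (A := S1 - s * s) in *.
  assert (HA : Rabs A <= A0 * sig).
  { apply Rabs_le_intro'.
    assert (Hc1 : 1 - (1 - u)^3 <= (1 + u)^3 - 1) by nra.
    assert (Hc2 : 0 <= (1 + u)^3 - 1) by nra.
    assert (((1 + u)^3 - 1) * S1 <= A0 * sig).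
    { unfold A0. replace ((1 + u)^4 - (1 + u)) with (((1 + u)^3 - 1) * (1 + u)) by ring.
      rewrite Rmult_assoc. apply Rmult_le_compat_l; lra. }
    assert ((1 - (1 - u)^3) * S1 <= ((1 + u)^3 - 1) * S1) by (apply Rmult_le_compat_r; lra).
    unfold A. lra. }
  set (L := sxl + syl) in *.
  assert (HL : Rabs L <= u * sig).
  { apply Rabs_le_intro'. unfold L, S1 in *. lra. }
  assert (EA : ds + sgl = A).
  { unfold A. rewrite Eds, Egl. ring. }
  rewrite EA in E2.
  assert (Htau : Rabs (sig - s * s) <= T * sig).
  { apply Rabs_le_intro'. assert (1 - (1 - u)^4 <= (1 + u)^4 - 1) by nra.
    assert ((1 - (1 - u)^4) * sig <= ((1 + u)^4 - 1) * sig) by (apply Rmult_le_compat_r; lra).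
    unfold T. lra. }
  assert (ELA : sig - s * s = L + A) by (unfold L, A, S1; lra).
  set (th := t - (sig - s * s)).
  set (lL := Rabs L) in *. set (lA := Rabs A) in *.
  assert (HLb := Rabs_le_both' L lL (Rle_refl _)).
  assert (HAb := Rabs_le_both' A lA (Rle_refl _)).
  apply Rabs_le_both' in E1. apply Rabs_le_both' in E2.
  assert (HlL0 : 0 <= lL) by apply Rabs_pos. assert (HlA0 : 0 <= lA) by apply Rabs_pos.
  assert (Ht12 : Rabs (t1 + t2) <= (1 + u) * (lL + lA)).
  { apply Rabs_le_intro'. lra. }
  apply Rabs_le_both' in E3.
  assert (Eu12 : u * Rabs (t1 + t2) <= u * ((1 + u) * (lL + lA))) by (apply Rmult_le_compat_l; lra).
  set (Dt := u * (2 + u) * (u + A0)).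
  assert (Hth : Rabs th <= Dt * sig).
  { apply Rabs_le_intro'.
    assert (lL + lA <= (u + A0) * sig) by lra.
    assert (u * (2 + u) * (lL + lA) <= Dt * sig).
    { assert (u*(2+u)*(lL+lA) <= u*(2+u)*((u+A0)*sig)) by (apply Rmult_le_compat_l; [nra|lra]).
      replace (Dt * sig) with (u*(2+u)*((u+A0)*sig)) by (unfold Dt; ring). auto. }
    unfold th. rewrite ELA. nra. }
  assert (Hcs : Rabs (t - c * s) <= u * Rabs t).
  { replace (t - c * s) with ((t / s - c) * s) by (field; lra).
    rewrite Rabs_mult, (Rabs_pos_eq s) by lra.
    apply Rle_trans with (u * Rabs (t / s) * s). { apply Rmult_le_compat_r; lra. }
    unfold Rdiv. rewrite Rabs_mult, Rabs_inv, (Rabs_pos_eq s) by lra.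
    right. field. lra. }
  assert (Ht : Rabs t <= T * sig + Rabs th).
  { replace t with ((sig - s * s) + th) by (unfold th; ring).
    eapply Rle_trans; [apply Rabs_triang|]. lra. }
  assert (Hsr2 : (s - r)^2 <= (2*u+u^2)^2 * sig).
  { rewrite <- Hrr.
    assert (0 <= u^2 * r) by (apply Rmult_le_pos; [apply pow_le|]; lra).
    assert (- ((2*u+u^2) * r) <= s - r <= (2*u+u^2) * r) by lra.
    assert (0 <= ((2*u+u^2) * r - (s - r)) * ((2*u+u^2) * r + (s - r))) by (apply Rmult_le_pos; lra).
    lra. }
  assert (Eid : 2 * s * (z - r) = (s - r)^2 + th + (c * s - t)).
  { rewrite Ez. unfold th. rewrite <- Hrr. field; lra. }
  assert (Hmain : 2 * s * Rabs (z - r) <= sig * ((2*u+u^2)^2 + (1+u)*(u*(2+u)*(u + ((1+u)^4-(1+u)))) + u*((1+u)^4-1))).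
  { replace (2 * s * Rabs (z - r)) with (Rabs (2 * s * (z - r))) by (rewrite Rabs_mult, (Rabs_pos_eq (2 * s)) by lra; ring).
    rewrite Eid.
    assert (Rabs (c * s - t) <= u * Rabs t) by (rewrite Rabs_minus_sym; auto).
    assert (Rabs ((s - r)^2 + th + (c * s - t)) <= (s - r)^2 + Rabs th + Rabs (c * s - t)).
    { eapply Rle_trans; [apply Rabs_triang|].
      eapply Rle_trans; [apply Rplus_le_compat_r; apply Rabs_triang|].
      rewrite (Rabs_pos_eq ((s - r)^2)) by (apply pow2_ge_0). lra. }
    assert (u * Rabs t <= u * (T * sig + Rabs th)) by (apply Rmult_le_compat_l; lra).
    assert (u * Rabs th <= u * (Dt * sig)) by (apply Rmult_le_compat_l; lra).
    unfold Dt, A0, T in *. nra. }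
  pose proof (poly_ineq u Hu) as Hp.
  assert (Hfin : 2 * s * Rabs (z - r) <= 2 * s * ((8*u^2+55*u^3) * r)).
  { eapply Rle_trans; [apply Hmain|].
    apply Rle_trans with (sig * (2*(1-u)^2*(8*u^2+55*u^3))).
    { apply Rmult_le_compat_l; lra. }
    rewrite <- Hrr.
    assert (0 <= 8*u^2+55*u^3) by (apply Rplus_le_le_0_compat; apply Rmult_le_pos; try lra; apply pow_le; lra).
    assert (((1-u)^2 * r) * ((8*u^2+55*u^3) * r) <= s * ((8*u^2+55*u^3) * r)).
    { apply Rmult_le_compat_r; [apply Rmult_le_pos; lra|lra]. }
    lra. }
  apply Rmult_le_reg_l with (2 * s); lra.
Qed.

Lemma kap_aux N kap : 0 < N -> 64 * N + 110 <= kap * N * N -> 64 * / N + 110 * (/ N)^2 <= kap.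
Proof.
  intros HN H. assert (0 < / N) by (apply Rinv_0_lt_compat; auto).
  assert (E : / N * N = 1) by (field; lra).
  apply Rmult_le_reg_r with (N * N); [nra|].
  replace ((64 * / N + 110 * (/ N)^2) * (N * N)) with (64 * N * (/ N * N) + 110 * ((/ N * N) * (/ N * N))) by ring.
  rewrite E. lra.
Qed.

Lemma kappa_ok u k kap : 0 < u -> In (k, kap) kappa_table -> u <= P2 (- k) ->
  64 * u + 110 * u^2 <= kap.
Proof.
  intros Hu Hin Hk.
  assert (Hk0 : (0 <= k)%Z /\ 64 * P2 (- k) + 110 * (P2 (- k))^2 <= kap).
  { simpl in Hin.
    repeat (destruct Hin as [Hin|Hin]; [injection Hin as <- <-; split; [lia|];
      rewrite powerRZ_neg', <- IZR_pow2 by lia;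
      match goal with |- context [IZR ?z] => let v := eval vm_compute in z in change z with v end;
      apply kap_aux; [apply IZR_lt; reflexivity|]; lra|]).
    contradiction. }
  destruct Hk0 as [_ Hk0].
  assert (u^2 <= (P2 (- k))^2) by (apply pow_incr; lra). lra.
Qed.

Lemma u_le16 p : (4 <= p)%Z -> P2 (- p) <= / 16.
Proof.
  intros Hp. rewrite powerRZ_neg'. rewrite <- IZR_pow2 by lia.
  apply Rinv_le_contravar; [lra|].
  replace 16 with (IZR (2 ^ 4)) by (simpl; lra).
  apply IZR_le. apply Z.pow_le_mono_r; lia.
Qed.

Lemma RN_weak p x r : (1 <= p)%Z -> is_RN p x r -> Rabs (x - r) <= P2 (- p) * Rabs x.
Proof.
  intros Hp H. pose proof (RN_rel p x r Hp H). pose proof (P2_pos (- p)).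
  pose proof (Rabs_pos (x - r)). nra.
Qed.

Theorem theorem4 (p : Z) (Hp : (4 <= p)%Z) (x y : R)
  (Hx : is_fp p x) (Hy : is_fp p y) (Hxy : x <> 0 \/ y <> 0)
  (a b sxh sxl syh syl sgh sgl s ds t1 t2 t c rho4 : R)
  (Hswap : (a, b) = (if Rlt_dec (Rabs x) (Rabs y) then (y, x) else (x, y)))
  (Hsxh : is_RN p (a * a) sxh) (Hsxl : sxl = a * a - sxh)
  (Hsyh : is_RN p (b * b) syh) (Hsyl : syl = b * b - syh)
  (Hsgh : is_RN p (sxh + syh) sgh) (Hsgl : sgl = (sxh + syh) - sgh)
  (Hs : is_RN p (sqrt sgh) s)
  (Hds : is_RN p (sgh - s * s) ds)
  (Ht1 : is_RN p (sxl + syl) t1)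
  (Ht2 : is_RN p (ds + sgl) t2)
  (Ht : is_RN p (t1 + t2) t)
  (Hc : is_RN p (t / s) c)
  (Hrho : is_RN p (c / 2 + s) rho4) :
  forall (k : Z) (kappa : R), In (k, kappa) kappa_table ->
    powerRZ 2 (- p) <= powerRZ 2 (- k) ->
    Rabs (rho4 / sqrt (x * x + y * y) - 1)
      <= powerRZ 2 (- p) + (7 + kappa) * (powerRZ 2 (- p)) ^ 2.
Proof.
  intros k kap Hin Hk.
  assert (Hp1 : (1 <= p)%Z) by lia.
  pose proof (u_le16 p Hp) as Hu16. pose proof (P2_pos (- p)) as Hu0.
  pose proof (kappa_ok _ k kap Hu0 Hin Hk) as Hkap.
  assert (Hsig : a * a + b * b = x * x + y * y).
  { destruct (Rlt_dec (Rabs x) (Rabs y)); injection Hswap as -> ->; ring. }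
  assert (Hsig0 : 0 < x * x + y * y).
  { destruct Hxy as [h|h]; [assert (0 < x * x) by (apply Rsqr_pos_lt; auto)|assert (0 < y * y) by (apply Rsqr_pos_lt; auto)]; nra. }
  set (u := P2 (- p)) in *.
  set (sig := x * x + y * y) in *.
  set (r := sqrt sig).
  assert (Hr : 0 < r) by (apply sqrt_lt_R0; auto).
  assert (Hrr : r * r = sig) by (apply sqrt_sqrt; lra).
  pose proof (RN_weak _ _ _ Hp1 Hsxh) as E1.
  pose proof (RN_weak _ _ _ Hp1 Hsyh) as E2.
  pose proof (RN_weak _ _ _ Hp1 Hsgh) as E3.
  pose proof (RN_weak _ _ _ Hp1 Hs) as E4.
  pose proof (RN_weak _ _ _ Hp1 Ht1) as E5.
  pose proof (RN_weak _ _ _ Hp1 Ht2) as E6.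
  pose proof (RN_weak _ _ _ Hp1 Ht) as E7.
  pose proof (RN_weak _ _ _ Hp1 Hc) as E8.
  pose proof (RN_rel _ _ _ Hp1 Hrho) as E9.
  fold u in E1, E2, E3, E4, E5, E6, E7, E8, E9.
  assert (Ha2 : 0 <= a * a) by nra. assert (Hb2 : 0 <= b * b) by nra.
  rewrite (Rabs_pos_eq (a * a)) in E1 by lra.
  rewrite (Rabs_pos_eq (b * b)) in E2 by lra.
  assert (HS : (1 - u) * sig <= sxh + syh).
  { apply Rabs_le_both in E1. apply Rabs_le_both in E2. rewrite <- Hsig. nra. }
  assert (HS0 : 0 < sxh + syh) by nra.
  assert (Hg0 : 0 < sgh).
  { rewrite (Rabs_pos_eq (sxh + syh)) in E3 by lra. apply Rabs_le_both in E3. nra. }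
  assert (Ex0 : sqrt sgh * sqrt sgh = sgh) by (apply sqrt_sqrt; lra).
  assert (Hx0 : 0 <= sqrt sgh) by apply sqrt_pos.
  rewrite (Rabs_pos_eq (sqrt sgh)) in E4 by lra.
  assert (Eds : ds = sgh - s * s).
  { apply (RN_exact p). apply sqrt_exact; auto; [lia|apply (proj1 Hsgh)]. auto. }
  destruct (core u sig r (a * a) (b * b) sxh syh sgh (sqrt sgh) s sgl sxl syl ds t1 t2 t c (c / 2 + s)
     ltac:(lra) Ha2 Hb2 (eq_sym Hsig) Hsig0 Hr Hrr E1 Hsxl E2 Hsyl E3 Hsgl Hx0 Ex0 E4 Eds E5 E6 E7 E8 eq_refl)
    as [Hs0 Hz].
  set (z := c / 2 + s) in *.
  set (H := 8 * u^2 + 55 * u^3) in *.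
  assert (HH : 0 <= H) by (unfold H; nra).
  assert (Hzabs : Rabs z <= r + H * r).
  { replace z with (r + (z - r)) by ring. eapply Rle_trans; [apply Rabs_triang|].
    rewrite (Rabs_pos_eq r) by lra. lra. }
  assert (Hf : (1 + u) * Rabs (z - rho4) <= u * (r + H * r)).
  { eapply Rle_trans; [apply E9|]. apply Rmult_le_compat_l; lra. }
  assert (Htot : Rabs (rho4 - r) <= Rabs (z - r) + Rabs (z - rho4)).
  { replace (rho4 - r) with ((z - r) - (z - rho4)) by ring.
    eapply Rle_trans; [apply Rabs_triang|]. rewrite Rabs_Ropp. lra. }
  replace (rho4 / r - 1) with ((rho4 - r) / r) by (field; lra).
  unfold Rdiv. rewrite Rabs_mult, Rabs_inv, (Rabs_pos_eq r) by lra.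
  apply Rmult_le_reg_r with r; auto.
  rewrite Rmult_assoc, Rinv_l, Rmult_1_r by lra.
  set (e := Rabs (z - r)) in *. set (f := Rabs (z - rho4)) in *.
  assert (He0 : 0 <= e) by apply Rabs_pos.
  assert (Hpoly : (1 + 2*u) * H + u <= (1 + u) * (u + (7 + kap) * u^2)).
  { unfold H.
    assert (u^2 * (64 * u + 110 * u^2) <= u^2 * kap) by (apply Rmult_le_compat_l; [nra|lra]).
    nra. }
  assert (Hfin : (1 + u) * (e + f) <= (1 + u) * ((u + (7 + kap) * u^2) * r)).
  { assert ((1 + 2*u) * e <= (1 + 2*u) * (H * r)) by (apply Rmult_le_compat_l; lra).
    assert (((1 + 2*u) * H + u) * r <= ((1 + u) * (u + (7 + kap) * u^2)) * r) by (apply Rmult_le_compat_r; lra).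
    nra. }
  apply Rmult_le_reg_l in Hfin; [|lra]. lra.
Qed.
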